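(* Let $G$ be a simple graph with $m$ edges and $t$ triangles, let $\epsilon\in(0,1)$, let $\widetilde{\alpha}$ be a positive integer and $\widetilde{t}>0$. Set $\gamma=\max\{\widetilde{\alpha},\widetilde{t}^{1/3}\}$, $\tau_d=\frac{8m\gamma^2}{\epsilon\widetilde{t}}$ and $\tau_t=12\gamma/\epsilon$. Let $H_d=\{e\in E: d(e)>\tau_d\}$ and $H_t=\{e\in E: t(e)>\tau_t\}$. If $\widetilde{\alpha}>\alpha(G)$ and $\widetilde{t}\in[t/4,t]$, then $|H_d|\le(\epsilon\widetilde{t})^{2/3}$ and $|H_t|\le(\epsilon\widetilde{t})^{2/3}$.
   Context: For an edge $e=\{u,v\}$, its degree is $d(e)=\min\{d(u),d(v)\}$, and $t(e)$ is the number of triangles of $G$ containing $e$. The arboricity $\alpha(G)$ is the minimum number of forests needed to cover the edge set of $G$. *)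

(* Defs.v *)
From Stdlib Require Import Reals ClassicalEpsilon.
From mathcomp Require Import all_boot.

Set Implicit Arguments.
Unset Strict Implicit.
Unset Printing Implicit Defensive.

Section Graph.
Variables (T : finType) (adj : rel T).

Definition edges : {set {set T}} :=
  [set e : {set T} | [exists x, exists y, adj x y && (e == [set x; y])]].

Definition deg (v : T) : nat := #|[set u | adj v u]|.

(* edge degree d(e) = min of the degrees of the endpoints of e
   (the identity #|T| of the fold exceeds every degree, so for a
   2-element e this is exactly minn (deg u) (deg v)). *)
Definition edeg (e : {set T}) : nat := \big[minn/#|T|]_(v in e) deg v.

Definition triangles : {set {set T}} :=
  [set S : {set T} | (#|S| == 3) &&
     [forall x in S, forall y in S, (x != y) ==> adj x y]].

Definition etri (e : {set T}) : nat := #|[set S in triangles | e \subset S]|.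

Definition forest (F : {set {set T}}) : Prop :=
  ~ exists c : seq T,
      [/\ uniq c, 3 <= size c & cycle (fun x y => [set x; y] \in F) c].

Definition covers_by_forests (k : nat) : Prop :=
  exists F : 'I_k -> {set {set T}},
    (forall i, F i \subset edges) /\ (forall i, forest (F i)) /\
    edges \subset \bigcup_(i < k) F i.

Definition coversb (k : nat) : bool :=
  if excluded_middle_informative (covers_by_forests k) then true else false.

Lemma forest_set1 (e : {set T}) : forest [set e].
Proof.
move=> [[|x [|y [|z s]]] [Hu Hs Hc]] //.
move: Hc; rewrite /cycle /= !inE => /and3P [/eqP Hxy /eqP Hyz _].
move: Hu => /= /andP [Hx /andP [Hy _]].
have : x \in [set y; z] by rewrite Hyz -Hxy !inE eqxx.
rewrite !inE => /orP [/eqP Exy|/eqP Exz].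
- by move: Hx; rewrite Exy !inE eqxx.
- by move: Hx; rewrite Exz !inE eqxx orbT.
Qed.

Lemma exists_cover : exists k, coversb k.
Proof.
exists #|edges|; rewrite /coversb; case: excluded_middle_informative => // [[]].
exists (fun i => [set enum_val i]); split; [|split].
- by move=> i; rewrite sub1set enum_valP.
- by move=> i; apply: forest_set1.
- apply/subsetP => e He; apply/bigcupP; exists (enum_rank_in He e) => //.
  by rewrite enum_rankK_in // inE.
Qed.

Definition arboricity : nat := ex_minn exists_cover.

End Graph.

Definition Rltb (x y : R) : bool := if Rlt_dec x y then true else false.

(* Main.v *)
Require Import Defs.
From Stdlib Require Import ClassicalEpsilon.
From Stdlib Require Import Reals Lra.
From mathcomp Require Import all_boot.

Lemma path_iota (T : eqType) (e : rel T) (w : nat -> T) :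
  (forall k, e (w k) (w k.+1)) ->
  forall n i, path e (w i) (map w (iota i.+1 n)).
Proof.
move=> H; elim=> [|n IH] i //=.
by rewrite H IH.
Qed.

Lemma uniq_map_iota (T : eqType) (w : nat -> T) n :
  (forall j, j < n -> w j \notin map w (iota 0 j)) -> uniq (map w (iota 0 n)).
Proof.
elim: n => [|n IH] H //.
rewrite -addn1 iotaD map_cat cat_uniq IH; last by move=> j Hj; apply: H; rewrite ltnW.
by rewrite /= add0n orbF H.
Qed.

Lemma no_leaf_cycle {T : finType} {F : {set {set T}}} {a b : T} :
  [set a; b] \in F -> (forall x y, [set x;y] \in F -> x != y) ->
  (forall p x, [set p; x] \in F -> exists y, [set x; y] \in F /\ y != p) ->
  ~ forest F.
Proof.
move=> Hab Hne Hnx fF.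
pose g p x := odflt x [pick y | ([set x; y] \in F) && (y != p)].
have Hg p x : [set p; x] \in F -> ([set x; g p x] \in F) && (g p x != p).
  move=> H; rewrite /g; case: pickP => [z -> //|Hn].
  case: (Hnx _ _ H) => y [Hy1 Hy2]; by move: (Hn y); rewrite Hy1 Hy2.
pose st n := iter n (fun q : T * T => (q.2, g q.1 q.2)) (a, b).
pose w n := (st n).1.
have Ew n : w n.+2 = g (w n) (w n.+1) by [].
have Inv n : [set w n; w n.+1] \in F /\ w n.+2 != w n.
  elim: n => [|n [IH _]].
    have H0 : [set w 0; w 1] \in F by [].
    by split=> //; rewrite Ew; case/andP: (Hg _ _ H0).
  have HF : [set w n.+1; w n.+2] \in F by rewrite Ew; case/andP: (Hg _ _ IH).
  by split=> //; rewrite Ew; case/andP: (Hg _ _ HF).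
pose P j := w j \in map w (iota 0 j).
have exP : exists j, P j.
  case: (boolP [exists j : 'I_(#|T|.+1), P j]) => [/existsP [j Hj]|Hn]; first by exists j.
  have U : uniq (map w (iota 0 #|T|.+1)).
    apply: uniq_map_iota => j Hj.
    by move/existsPn: Hn => /(_ (Ordinal Hj)).
  move/card_uniqP: U; rewrite size_map size_iota => Hc.
  by move: (max_card (mem (map w (iota 0 #|T|.+1)))); rewrite Hc ltnn.
case: (ex_minnP exP) => j Pj Hmin.
have Hu : uniq (map w (iota 0 j)).
  apply: uniq_map_iota => k Hk; apply/negP => Pk.
  by move: (Hmin _ Pk); rewrite leqNgt Hk.
case/mapP: Pj => i; rewrite mem_iota add0n /= => Hij Ewij.
set l := j - i.+1.
have Ej : j = i + l.+1 by rewrite /l subnSK // subnKC // ltnW.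
apply: fF; exists (w i :: map w (iota i.+1 l)); split.
- move: Hu; rewrite Ej iotaD map_cat cat_uniq add0n => /and3P [_ _].
  by [].
- rewrite /= size_map size_iota ltnS.
  case: l Ej => [|[|l]] Ej //.
  + have := Hne _ _ (proj1 (Inv i)); by rewrite -addn1 -Ej Ewij eqxx.
  + have := proj2 (Inv i); by rewrite -addn2 -Ej Ewij eqxx.
- rewrite /= -{2}Ewij.
  have -> : rcons (map w (iota i.+1 l)) (w j) = map w (iota i.+1 l.+1).
    by rewrite -map_rcons -cats1 -(addn1 l) iotaD Ej /= addSnnS.
  apply: path_iota => k; exact: (proj1 (Inv k)).
Qed.

Lemma edgeP (T : finType) (adj : rel T) e :
  e \in edges adj -> exists a b, adj a b /\ e = [set a; b].
Proof. by rewrite inE => /existsP [a /existsP [b /andP [H /eqP ->]]]; exists a, b. Qed.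

Lemma edge_ne (T : finType) (adj : rel T) (irr : irreflexive adj) x y :
  [set x; y] \in edges adj -> x != y.
Proof.
case/edgeP => a [b [Hab E]]; apply/eqP => Exy; subst y.
have : a \in [set x; x] by rewrite E !inE eqxx.
have : b \in [set x; x] by rewrite E !inE eqxx orbT.
rewrite !inE !orbb => /eqP Eb /eqP Ea; subst.
by rewrite irr in Hab.
Qed.

Lemma forest_sub (T : finType) (F F' : {set {set T}}) :
  F' \subset F -> forest F -> forest F'.
Proof.
move=> sub fF [c [u s cy]]; apply: fF; exists c; split=> //.
by apply: sub_cycle cy => x y; apply: (subsetP sub).
Qed.

Lemma forest_leaf (T : finType) (adj : rel T) (irr : irreflexive adj)
  (F : {set {set T}}) :
  F \subset edges adj -> forest F -> F != set0 ->
  exists e v, [/\ e \in F, v \in e & forall e', e' \in F -> v \in e' -> e' = e].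
Proof.
move=> sub fF nz.
case: (boolP [exists e in F, exists v in e, [forall e' in F, (v \in e') ==> (e' == e)]]).
  case/existsP => e /andP [eF /existsP [v /andP [ve /forallP H]]].
  exists e, v; split=> // e' e'F ve'.
  by move: (H e'); rewrite e'F ve' /= => /eqP.
move/existsPn => Hn; exfalso.
case/set0Pn: nz => e0 e0F.
case/edgeP: (subsetP sub _ e0F) => a [b [_ E0]]; subst e0.
apply: (no_leaf_cycle e0F _ _ fF).
  by move=> x y H; apply: (@edge_ne T adj irr); apply: (subsetP sub).
move=> p x H.
move: (Hn [set p; x]); rewrite H /= => /existsPn /(_ x).
rewrite !inE eqxx orbT /= => /forallPn [e'].
rewrite !negb_imply => /andP [e'F /andP [xe' ne]].
case/edgeP: (subsetP sub _ e'F) => a' [b' [_ E']]; subst e'.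
move: xe'; rewrite !inE => /orP [/eqP Ex|/eqP Ex]; subst x.
- exists b'; split=> //; apply/eqP => Eb; subst b'.
  by move: ne; rewrite setUC eqxx.
- exists a'; rewrite setUC; split=> //; apply/eqP => Eb; subst a'.
  by move: ne; rewrite eqxx.
Qed.

Lemma edeg_le (T : finType) (adj : rel T) (e : {set T}) (v : T) : v \in e -> edeg adj e <= deg adj v.
Proof.
move=> ve; rewrite /edeg -big_filter.
have : v \in [seq i <- index_enum T | i \in e] by rewrite mem_filter ve mem_index_enum.
elim: [seq i <- _ | _] => [|y s IHs] //; rewrite in_cons big_cons.
case/orP => [/eqP <-|/IHs H]; first exact: geq_minl.
exact: leq_trans (geq_minr _ _) H.
Qed.

Lemma forest_sum (T : finType) (adj : rel T) (irr : irreflexive adj) n :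
  forall (F : {set {set T}}) (S : {set T}), #|F| <= n -> F \subset edges adj -> forest F ->
  (forall e, e \in F -> e \subset S) ->
  \sum_(e in F) edeg adj e <= \sum_(v in S) deg adj v.
Proof.
elim: n => [|n IH] F S cF sub fF HS.
  by move: cF; rewrite leqn0 cards_eq0 => /eqP ->; rewrite big_set0.
case: (eqVneq F set0) => [->|nz]; first by rewrite big_set0.
case: (@forest_leaf T adj irr F sub fF nz) => e [v [eF ve Hl]].
have vS : v \in S by apply: (subsetP (HS _ eF)).
rewrite (big_setD1 _ eF) (big_setD1 _ vS) /=.
apply: leq_add; first exact: edeg_le.
apply: IH.
- by move: cF; rewrite (cardsD1 e) eF add1n ltnS.
- by apply: subset_trans sub; apply: subsetDl.
- by apply: forest_sub fF; apply: subsetDl.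
- move=> e'; rewrite !inE => /andP [ne e'F].
  apply/subsetP => u ue'; rewrite !inE (subsetP (HS _ e'F)) // andbT.
  by apply/eqP => Eu; subst u; move: ne; rewrite (Hl _ e'F ue') eqxx.
Qed.

Lemma arb_cover (T : finType) (adj : rel T) : covers_by_forests adj (arboricity adj).
Proof.
have : coversb adj (arboricity adj) by rewrite /arboricity; case: ex_minnP.
by rewrite /coversb; case: excluded_middle_informative.
Qed.

Lemma sum_edeg_le (T : finType) (adj : rel T) (irr : irreflexive adj) :
  \sum_(e in edges adj) edeg adj e <= arboricity adj * \sum_v deg adj v.
Proof.
case: (arb_cover T adj) => F [sub [fF cov]].
set k := arboricity adj in F sub fF cov *.
apply: (@leq_trans (\sum_e \sum_(i < k) (if e \in F i then edeg adj e else 0))).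
  rewrite [X in X <= _]big_mkcond /=; apply: leq_sum => e _.
  case: ifP => // eE.
  case/bigcupP: (subsetP cov _ eE) => i _ eFi.
  by rewrite (bigD1 i) //= eFi leq_addr.
rewrite exchange_big /=.
apply: (@leq_trans (\sum_(i < k) \sum_v deg adj v)); last by rewrite sum_nat_const card_ord.
apply: leq_sum => i _; rewrite -big_mkcond /=.
apply: leq_trans (@forest_sum T adj irr #|F i| (F i) [set: T] _ _ _ _) _ => //;
  try by [apply: eq_leq; apply: eq_bigl => v; rewrite inE | move=> e _; apply/subsetP => v; rewrite inE].
Qed.

Lemma handshake (T : finType) (adj : rel T) :
  \sum_v deg adj v <= 4 * #|edges adj|.
Proof.
have -> : \sum_v deg adj v = \sum_v \sum_u (adj v u : nat).
  apply: eq_bigr => v _; rewrite /deg -sum1_card big_mkcond /=.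
  by apply: eq_bigr => u _; rewrite inE; case: (adj v u).
rewrite pair_big /= -big_mkcondr /=.
rewrite (partition_big (fun p : T * T => [set p.1; p.2]) (mem (edges adj))) /=; last first.
  by move=> [x y] /= Hxy; rewrite inE; apply/existsP; exists x; apply/existsP; exists y; rewrite Hxy eqxx.
rewrite mulnC -sum_nat_const; apply: leq_sum => e eE.
case/edgeP: eE => a [b [_ ->]].
apply: (@leq_trans #|setX [set a; b] [set a; b]|); last by rewrite cardsX cards2; case: (a != b).
rewrite sum1_card; apply: subset_leq_card; apply/subsetP => [[x y]].
rewrite !inE => /andP [_ /eqP E]; move: E => /= E.
have hx : x \in [set a; b] by rewrite -E !inE eqxx.
have hy : y \in [set a; b] by rewrite -E !inE eqxx orbT.
by move: hx hy; rewrite !inE => -> ->.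
Qed.

Lemma tri_sum (T : finType) (adj : rel T) (irr : irreflexive adj) :
  \sum_(e in edges adj) etri adj e <= 3 * #|triangles adj|.
Proof.
have -> : \sum_(e in edges adj) etri adj e =
          \sum_(e in edges adj) \sum_(S in triangles adj) (e \subset S : nat).
  apply: eq_bigr => e _; rewrite /etri -sum1_card [LHS]big_mkcond [RHS]big_mkcond /=.
  by apply: eq_bigr => S _; rewrite in_set; case: (S \in triangles adj); case: (e \subset S).
rewrite exchange_big /= mulnC -sum_nat_const; apply: leq_sum => S.
rewrite inE => /andP [/eqP c3 _].
apply: (@leq_trans #|[set A : {set T} | A \subset S & #|A| == 2]|); last by rewrite cards_draws c3.
rewrite (eq_bigr (fun i : {set T} => if i \subset S then 1 else 0)); last by move=> i _; case: (i \subset S).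
rewrite -big_mkcondr /= sum1dep_card; apply: subset_leq_card; apply/subsetP => A.
rewrite in_set => /andP [AE AS]; rewrite in_set AS /=.
move: (AE); case/edgeP => a [b [_ EA]]; move: AE; rewrite EA => AE.
by rewrite cards2 (@edge_ne T adj irr _ _ AE).
Qed.

Local Open Scope R_scope.
Lemma sum_lb (I : finType) (A : {set I}) (f : I -> nat) (x : R) :
  (forall i, i \in A -> x <= INR (f i)) ->
  INR #|A| * x <= INR (\sum_(i in A) f i)%N.
Proof.
move=> H; rewrite cardE -big_enum.
have : forall i, i \in enum A -> x <= INR (f i) by move=> i; rewrite mem_enum; apply: H.
elim: (enum A) => [|y s IH] Hs.
  by rewrite big_nil /=; lra.
rewrite big_cons; change (INR (size (y :: s))) with (INR (S (size s))); rewrite S_INR plus_INR.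
have := IH (fun i hi => Hs i (ltac:(by rewrite in_cons hi orbT))).

have := Hs y (mem_head y s); lra.
Qed.
Local Close Scope R_scope.

Lemma sum_sub (I : finType) (A B : {set I}) (f : I -> nat) :
  A \subset B -> \sum_(i in A) f i <= \sum_(i in B) f i.
Proof.
move=> sub; rewrite big_mkcond [X in _ <= X]big_mkcond /=; apply: leq_sum => i _.
by case: ifP => // iA; rewrite (subsetP sub _ iA).
Qed.

Local Open Scope R_scope.

Lemma final_ineq (eps tt gamma X : R) :
  0 < eps < 1 -> 0 < tt -> Rpower tt (1/3) <= gamma -> X * gamma <= eps * tt ->
  X <= Rpower (eps * tt) (2/3).
Proof.
move=> He Ht Hg HX.
set c := Rpower tt (1/3).
set d := Rpower tt (2/3).
have c0 : 0 < c by rewrite /c /Rpower; apply: exp_pos.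
have d0 : 0 < d by rewrite /d /Rpower; apply: exp_pos.
have Etd : tt = c * d by rewrite /c /d -Rpower_plus; replace (1/3 + 2/3) with 1 by field; rewrite Rpower_1.
have p0 : 0 < Rpower eps (2/3) by rewrite /Rpower; apply: exp_pos.
have q1 : Rpower eps (1/3) <= 1.
  rewrite /Rpower -exp_0; left; apply: exp_increasing.
  have := ln_increasing eps 1 (proj1 He) (proj2 He); rewrite ln_1 exp_0; lra.
have q0 : 0 < Rpower eps (1/3) by rewrite /Rpower; apply: exp_pos.
have Ee : eps = Rpower eps (1/3) * Rpower eps (2/3).
  by rewrite -Rpower_plus; replace (1/3 + 2/3) with 1 by field; rewrite Rpower_1 //; lra.
rewrite -Rpower_mult_distr; try lra.
rewrite -/d.
have ep : eps <= Rpower eps (2/3).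
  rewrite {1}Ee; have := Rmult_le_compat_r (Rpower eps (2/3)) _ _ (Rlt_le _ _ p0) q1; lra.
case: (Rle_or_lt X 0) => HX0; first by nra.
have : X * c <= eps * c * d.
  have : X * c <= X * gamma by apply: Rmult_le_compat_l; [lra | exact Hg].
  rewrite Etd in HX; lra.
move=> H.
have H2 : X <= eps * d.
  apply: (Rmult_le_reg_r c) => //; lra.
have := Rmult_le_compat_r d _ _ (Rlt_le _ _ d0) ep; lra.
Qed.

Theorem claim3p4 (T : finType) (adj : rel T)
  (adj_sym : symmetric adj) (adj_irr : irreflexive adj)
  (eps : R) (alpha_t : nat) (t_t : R) :
  0 < eps < 1 -> (0 < alpha_t)%N -> 0 < t_t ->
  let m := INR #|edges adj| in
  let t := INR #|triangles adj| in
  let gamma := Rmax (INR alpha_t) (Rpower t_t (1 / 3)) in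
  let tau_d := 8 * m * gamma ^ 2 / (eps * t_t) in
  let tau_t := 12 * gamma / eps in
  let H_d := [set e in edges adj | Rltb tau_d (INR (edeg adj e))] in
  let H_t := [set e in edges adj | Rltb tau_t (INR (etri adj e))] in
  (arboricity adj < alpha_t)%N ->
  t / 4 <= t_t <= t ->
  INR #|H_d| <= Rpower (eps * t_t) (2 / 3) /\
  INR #|H_t| <= Rpower (eps * t_t) (2 / 3).
Proof.
move=> He Ha Ht m t gamma tau_d tau_t H_d H_t Harb Htt.
have Ga : INR alpha_t <= gamma by apply: Rmax_l.
have Gc : Rpower t_t (1/3) <= gamma by apply: Rmax_r.
have A1 : 1 <= INR alpha_t by apply: (le_INR 1); apply/leP.
have G0 : 0 < gamma by lra.
have Rlt_of b x y : Rltb x y = b -> b -> x < y.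
  by move=> <-; rewrite /Rltb; case: Rlt_dec.
split.
- apply: (@final_ineq eps t_t gamma) => //.
  case: (posnP #|H_d|) => [->|Npos]; first by rewrite /=; nra.
  have sub : H_d \subset edges adj by apply/subsetP => e; rewrite inE => /andP [].
  have m1 : 1 <= m.
    rewrite /m; apply: (le_INR 1); apply/leP; apply: leq_trans Npos _.
    exact: subset_leq_card.
  have Hs : INR #|H_d| * tau_d <= INR (\sum_(e in H_d) edeg adj e)%N.
    apply: sum_lb => e; rewrite inE => /andP [_ H]; left; exact: Rlt_of H.
  have Hs2 : INR (\sum_(e in H_d) edeg adj e)%N <= INR (arboricity adj) * (4 * m).
    rewrite /m -(INR_IZR_INZ 4) -!mult_INR; apply: le_INR; apply/leP.
    apply: leq_trans (@sum_sub _ _ _ (edeg adj) sub) _.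
    apply: leq_trans (@sum_edeg_le T adj adj_irr) _.
    by rewrite leq_mul2l handshake orbT.
  have Har : INR (arboricity adj) <= INR alpha_t by apply: le_INR; apply/leP; apply: ltnW.
  have H3 : INR #|H_d| * tau_d <= gamma * (4 * m).
    apply: (Rle_trans _ _ _ (Rle_trans _ _ _ Hs Hs2)); apply: Rmult_le_compat_r; lra.
  rewrite /tau_d in H3.
  have K0 : 0 < eps * t_t by nra.
  have := Rmult_le_compat_r (eps * t_t) _ _ (Rlt_le _ _ K0) H3.
  have -> : INR #|H_d| * (8 * m * gamma ^ 2 / (eps * t_t)) * (eps * t_t)
     = (INR #|H_d| * gamma) * (8 * m * gamma) by field; lra.
  move=> H4.
  have H5 : INR #|H_d| * gamma <= (eps * t_t) / 2.
    apply: (Rmult_le_reg_r (8 * m * gamma)); first nra.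
    have -> : eps * t_t / 2 * (8 * m * gamma) = gamma * (4 * m) * (eps * t_t) by field.
    exact: H4.
  lra.
- apply: (@final_ineq eps t_t gamma) => //.
  have Hs : INR #|H_t| * tau_t <= INR (\sum_(e in H_t) etri adj e)%N.
    apply: sum_lb => e; rewrite inE => /andP [_ H]; left; exact: Rlt_of H.
  have Hs2 : INR (\sum_(e in H_t) etri adj e)%N <= 3 * t.
    rewrite /t -(INR_IZR_INZ 3) -mult_INR; apply: le_INR; apply/leP.
    apply: leq_trans _ (@tri_sum T adj adj_irr).
    by apply: sum_sub; apply/subsetP => e; rewrite inE => /andP [].
  rewrite /tau_t in Hs.
  have H3 : INR #|H_t| * (12 * gamma / eps) <= 12 * t_t by lra.
  have := Rmult_le_compat_r eps _ _ (Rlt_le _ _ (proj1 He)) H3.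
  have -> : INR #|H_t| * (12 * gamma / eps) * eps = 12 * (INR #|H_t| * gamma) by field; lra.
  lra.
Qed.
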